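(* Let $(R,\mathfrak{m})$ be a finite commutative local ring which is uniserial, and let $k$ be the length of $R$ as a module over itself. Let $K$ be a field of characteristic zero. Then $\mathrm{St}^K_2(R)$ is a direct sum of exactly $k$ irreducible $\mathrm{GL}_2(R)$-representations, which are pairwise non-isomorphic and none of which is trivial. In particular, for a Dedekind domain $\mathcal{O}$ and a nonzero prime ideal $\mathfrak{p}$, $\mathrm{St}^K_2(\mathcal{O}/\mathfrak{p}^k)$ has length exactly $k$ as a $\mathrm{GL}_2(\mathcal{O}/\mathfrak{p}^k)$-representation.
   Context: A ring is uniserial if its ideals are linearly ordered by inclusion. For $n=2$, the Tits complex $\mathcal{T}_2(R)$ is the discrete set of rank one direct summands $L$ of $R^2$ with $L$ and $R^2/L$ free (i.e. lines spanned by unimodular vectors), with its natural $\mathrm{GL}_2(R)$-action, and $\mathrm{St}^K_2(R)=\tilde H_{0}(\mathcal{T}_2(R);K)$, the kernel of the augmentation $K[\mathcal{T}_2(R)]\to K$, viewed as a $\mathrm{GL}_2(R)$-representation. *)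

(* Defs.v *)
From HB Require Import structures.
From mathcomp Require Import all_boot all_order all_algebra all_fingroup.
From mathcomp Require Import mxrepresentation.
Set Implicit Arguments. Unset Strict Implicit. Unset Printing Implicit Defensive.
Import GRing.Theory.
Local Open Scope ring_scope.

Section RingNotions.
Variable R : finComUnitRingType.

Definition is_ideal (I : {set R}) : bool :=
  [&& 0 \in I,
      [forall x in I, [forall y in I, x + y \in I]] &
      [forall r : R, [forall x in I, r * x \in I]]].

Definition is_maximal_ideal (M : {set R}) : Prop :=
  [/\ is_ideal M, M != setT &
      forall J : {set R}, is_ideal J -> M \subset J -> J = M \/ J = setT].

Definition local_ring : Prop :=
  exists M, is_maximal_ideal M /\ forall M', is_maximal_ideal M' -> M' = M.

Definition uniserial : Prop :=
  forall I J : {set R}, is_ideal I -> is_ideal J -> I \subset J \/ J \subset I.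

Definition strict_ideal_chain (m : nat) (c : nat -> {set R}) : Prop :=
  (forall i, i <= m -> is_ideal (c i))%N /\
  (forall i, i < m -> c i \proper c i.+1)%N.

(* length of R as a module over itself: the maximal length of a strict chain
   of submodules *)
Definition ring_length (k : nat) : Prop :=
  (exists c, strict_ideal_chain k c) /\
  (forall m c, strict_ideal_chain m c -> m <= k)%N.

End RingNotions.

Section Tits.
Variable R : finComUnitRingType.

Definition unimodular (u : 'rV[R]_2) : bool :=
  [exists w : 'cV[R]_2, u *m w == 1%:M].

Definition line (u : 'rV[R]_2) : {set 'rV[R]_2} := [set r *: u | r : R].

Definition Tits : {set {set 'rV[R]_2}} :=
  [set L | [exists u, unimodular u && (L == line u)]].

Definition nTits := #|Tits|.

Definition lineAct (g : {'GL_2[R]}) (L : {set 'rV[R]_2}) : {set 'rV[R]_2} :=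
  [set v *m GLval g | v in L].

Lemma lineAct_line g u : lineAct g (line u) = line (u *m GLval g).
Proof.
rewrite /lineAct /line -imset_comp; apply: eq_imset => r /=.
by rewrite scalemxAl.
Qed.

Lemma unimodular_act (g : {'GL_2[R]}) u :
  unimodular u -> unimodular (u *m GLval g).
Proof.
case/existsP=> w /eqP Hw; apply/existsP; exists (invmx (GLval g) *m w).
rewrite !mulmxA -(mulmxA u) mulmxV; last by case: g => A HA; rewrite unitmxE -unitmxE; exact: HA.
by have -> : u *m 1%:M = u := mulmx1 u; rewrite Hw.
Qed.

Lemma lineAct_Tits g L : L \in Tits -> lineAct g L \in Tits.
Proof.
rewrite !inE => /existsP [u /andP [Hu /eqP ->]].
apply/existsP; exists (u *m GLval g); rewrite unimodular_act //=.
by rewrite lineAct_line.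
Qed.

Lemma lineAct1 L : lineAct 1%g L = L.
Proof.
rewrite /lineAct GL_1E.
by rewrite (eq_imset _ (fun v => mulmx1 v)) imset_id.
Qed.

Lemma lineActM (g h : {'GL_2[R]}) L :
  lineAct (g * h)%g L = lineAct h (lineAct g L).
Proof.
rewrite /lineAct -imset_comp GL_MxE; apply: eq_imset => v /=.
by rewrite mulmxA.
Qed.

End Tits.

Section PermRep.
Variables (R : finComUnitRingType) (K : fieldType).

Definition permRep_mx (g : {'GL_2[R]}) : 'M[K]_(nTits R) :=
  \matrix_(i, j) ((lineAct g (enum_val i) == enum_val j)%:R).

Lemma permRep_mx_repr : mx_repr [set: {'GL_2[R]}] permRep_mx.
Proof.
split.
  apply/matrixP=> i j; rewrite !mxE lineAct1 (inj_eq enum_val_inj).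
  by rewrite eq_sym.
move=> x y _ _; apply/matrixP=> i j; rewrite !mxE.
have Hx : lineAct x (enum_val i) \in Tits R by apply: lineAct_Tits; apply: enum_valP.
pose l0 := enum_rank_in Hx (lineAct x (enum_val i)).
have El0 : enum_val l0 = lineAct x (enum_val i) by rewrite enum_rankK_in.
rewrite (bigD1 l0) //= !mxE El0 eqxx mul1r big1 ?addr0; first by rewrite lineActM.
move=> l Hl; rewrite !mxE.
have -> : (lineAct x (enum_val i) == enum_val l) = false.
  by apply/negbTE; rewrite -El0 (inj_eq enum_val_inj) eq_sym.
by rewrite mul0r.
Qed.

Definition permRep : mx_representation K [set: {'GL_2[R]}] (nTits R) :=
  MxRepresentation permRep_mx_repr.

(* St^K_2(R): the kernel of the augmentation K[T_2(R)] -> K (sum of coordinates),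
   as a subspace (row space) of K[T_2(R)] *)
Definition Steinberg : 'M[K]_(nTits R) := kermx (const_mx 1 : 'M[K]_(nTits R, 1)).

End PermRep.

Definition trivial_submod (F : fieldType) (gT : finGroupType) (G : {group gT})
  (n : nat) (rG : mx_representation F G n) (U : 'M[F]_n) : Prop :=
  \rank U = 1%N /\ forall g, g \in G -> U *m rG g = U.

(* Main.v *)
Require Import Defs.
From HB Require Import structures.
From mathcomp Require Import all_boot all_order all_algebra all_fingroup.
From mathcomp Require Import mxrepresentation.
From mathcomp Require Import ring zify.
Set Implicit Arguments. Unset Strict Implicit. Unset Printing Implicit Defensive.
Import GRing.Theory.
Local Open Scope ring_scope.

Section Abstract.
Variables (F : fieldType) (gT : finGroupType) (G : {group gT}) (n : nat).
Variable rG : mx_representation F G n.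

Lemma eq_on m1 m2 m3 (X : 'M[F]_(m1, n)) (U : 'M[F]_(m2, n)) (V : 'M[F]_(m3, n)) (A B : 'M[F]_n) :
  (X <= U + V)%MS -> U *m A = U *m B -> V *m A = V *m B -> X *m A = X *m B.
Proof.
move=> sX eU eV; apply/eqP; rewrite -subr_eq0 -mulmxBr.
have: (X <= kermx (A - B))%MS.
  apply: submx_trans sX _; rewrite addsmx_sub !sub_kermx !mulmxBr eU eV !subrr.
  by rewrite !eqxx.
by rewrite sub_kermx.
Qed.

Lemma proj_comm (U T : 'M_n) x m (X : 'M_(m, n)) :
  mxmodule rG U -> mxmodule rG T -> (U :&: T = 0)%MS -> x \in G ->
  (X <= U + T)%MS -> X *m proj_mx U T *m rG x = X *m rG x *m proj_mx U T.
Proof.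
move=> mU mT dx Gx sX; rewrite -[LHS]mulmxA -[RHS]mulmxA; apply: eq_on sX _ _;
  rewrite [LHS]mulmxA [RHS]mulmxA.
  rewrite proj_mx_id // proj_mx_id //; exact: (mxmoduleP mU x Gx).
rewrite proj_mx_0 ?mul0mx // proj_mx_0 //; exact: (mxmoduleP mT x Gx).
Qed.

Fact prj_key : unit. Proof. exact: tt. Qed.
Definition prj (U T : 'M[F]_n) := locked_with prj_key (proj_mx U T).
Lemma prjE U T : prj U T = proj_mx U T. Proof. exact: unlock. Qed.
Lemma prj_id m U T (X : 'M_(m, n)) : (U :&: T = 0)%MS -> (X <= U)%MS -> X *m prj U T = X.
Proof. by rewrite prjE; apply: proj_mx_id. Qed.
Lemma prj_0 m U T (X : 'M_(m, n)) : (U :&: T = 0)%MS -> (X <= T)%MS -> X *m prj U T = 0.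
Proof. by rewrite prjE; apply: proj_mx_0. Qed.
Lemma prj_sub m U T (X : 'M_(m, n)) : (X *m prj U T <= U)%MS.
Proof. by rewrite prjE; apply: proj_mx_sub. Qed.
Lemma prj_proj U T : (U :&: T = 0)%MS -> prj U T *m prj U T = prj U T.
Proof. by rewrite prjE; apply: proj_mx_proj. Qed.
Lemma prj_comm (U T : 'M_n) x m (X : 'M_(m, n)) :
  mxmodule rG U -> mxmodule rG T -> (U :&: T = 0)%MS -> x \in G ->
  (X <= U + T)%MS -> X *m prj U T *m rG x = X *m rG x *m prj U T.
Proof. by rewrite prjE; apply: proj_comm. Qed.

Lemma indep (J : finType) (Q X Y : J -> 'M_n) (c : J -> F) :
  (forall a b, a != b -> X a *m Q b *m Y a = 0) ->
  (forall a, X a *m Q a *m Y a != 0) ->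
  \sum_a c a *: Q a = 0 -> forall a, c a = 0.
Proof.
move=> h0 h1 hs a.
have: X a *m (\sum_b c b *: Q b) *m Y a = 0 by rewrite hs mulmx0 mul0mx.
rewrite mulmx_sumr mulmx_suml (bigD1 a) //= big1 ?addr0.
  by rewrite -scalemxAr -scalemxAl => /eqP; rewrite scalemx_eq0 (negbTE (h1 a)) orbF => /eqP.
move=> b ba; rewrite -scalemxAr -scalemxAl h0 ?scaler0 //; by rewrite eq_sym.
Qed.

Hypothesis redG : mx_completely_reducible rG 1%:M.
Variables (I : finType) (W : I -> 'M[F]_n).
Hypotheses (modW : forall i, mxmodule rG (W i)) (nzW : forall i, W i != 0).
Hypothesis dxW : forall i, (W i :&: (\sum_(j | j != i) W j) = 0)%MS.
Hypothesis fullW : (1%:M <= \sum_i W i)%MS.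
Hypothesis dimC : forall (J : finType) (Q : J -> 'M_n), (#|I| < #|J|)%N ->
  (forall a, centgmx rG (Q a)) ->
  exists2 c : J -> F, (exists a, c a != 0) & \sum_a c a *: Q a = 0.

Let Rest i := (\sum_(j | j != i) W j)%MS.
Let P i := prj (W i) (Rest i).

Let full i : (1%:M <= W i + Rest i)%MS.
Proof. by move: fullW; rewrite (bigD1 i). Qed.

Let modR i : mxmodule rG (Rest i).
Proof. by apply: sumsmx_module => j _; apply: modW. Qed.

Let sWR i j : j != i -> (W j <= Rest i)%MS.
Proof. by move=> ji; rewrite /Rest (sumsmx_sup j). Qed.

Let PW i : W i *m P i = W i.
Proof. by rewrite prj_id. Qed.

Let PR i : Rest i *m P i = 0.
Proof. by rewrite prj_0. Qed.

Let PWj i j : j != i -> W j *m P i = 0.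
Proof. by move=> ji; rewrite prj_0 ?sWR. Qed.

Let PP i j : i != j -> P i *m P j = 0.
Proof.
move=> ij; rewrite -[P i]mul1mx prj_0 //.
by apply: submx_trans (prj_sub _ _ _) (sWR _).
Qed.

Let Pcent i : centgmx rG (P i).
Proof.
apply/centgmxP => x Gx.
by rewrite -[P i]mul1mx prj_comm ?mul1mx.
Qed.

Lemma abstract_simple i : mxsimple rG (W i).
Proof.
split; [exact: modW | exact: nzW |] => U mU sUW nzU.
apply/idPn => nsub.
have [T mT defUT dxUT] := mx_reducibleS (modW i) (submx1 _) redG mU sUW.
have dUT : (U :&: T = 0)%MS by apply/mxdirect_addsP.
have dTU : (T :&: U = 0)%MS by rewrite capmxC.
have nzT : T != 0.
  apply/eqP => T0; move: nsub; rewrite -defUT addsmx_sub submx_refl T0.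
  by rewrite sub0mx.
have sTW : (T <= W i)%MS by rewrite -defUT addsmxSr.
pose Q (a : option I) := match a with
  | Some j => if j == i then P i *m prj U T else P j
  | None => P i *m prj T U end.
have cQ : forall a, centgmx rG (Q a).
  have gen : forall (A B : 'M_n), mxmodule rG A -> mxmodule rG B ->
     (A :&: B = 0)%MS -> (W i <= A + B)%MS -> centgmx rG (P i *m prj A B).
    move=> A B mA mB dAB sW; apply/centgmxP => x Gx.
    rewrite -[LHS]mul1mx -[RHS]mul1mx.
    apply: (eq_on (full i)); rewrite !mulmxA.
      rewrite PW prj_comm //.
      by rewrite (prj_id (dxW i) (mxmoduleP (modW i) x Gx)).
    by rewrite (PR i) !mul0mx (prj_0 (dxW i) (mxmoduleP (modR i) x Gx)) mul0mx.
  case=> [j|] /=; last by apply: gen => //; rewrite addsmxC defUT.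
  case: eqP => _; last exact: Pcent.
  by apply: gen => //; rewrite defUT.
have hcard : (#|I| < #|{: option I}|)%N by rewrite card_option.
have [c [a nza] hc] := @dimC (option I) Q hcard cQ.
pose X (a : option I) := match a with
  | Some j => if j == i then U else W j
  | None => T end.
suff : c a = 0 by move/eqP; rewrite (negbTE nza).
apply: (@indep _ Q X (fun=> 1%:M) c) => //.
- move=> [j|] [l|] //= ne; rewrite mulmx1.
  + case: (eqVneq j i) => [ji|ji]; case: (eqVneq l i) => [li|li].
    * by move: ne; rewrite ji li eqxx.
    * subst j; by rewrite prj_0 // (submx_trans sUW) // sWR // eq_sym.
    * by subst l; rewrite mulmxA (PWj ji) mul0mx.
    * have jl : j != l by apply: contraNneq ne => ->.
      by rewrite (PWj jl).
  + case: (eqVneq j i) => [ji|ji].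
      by subst j; rewrite mulmxA (prj_id _ sUW) // prj_0.
    by rewrite mulmxA (PWj ji) mul0mx.
  + case: (eqVneq l i) => [li|li].
      by subst l; rewrite mulmxA (prj_id _ sTW) // prj_0.
    by rewrite prj_0 // (submx_trans sTW) // sWR // eq_sym.
- move=> [j|] /=; rewrite mulmx1.
  + case: (eqVneq j i) => [ji|ji]; last by rewrite (PW j).
    by subst j; rewrite mulmxA (prj_id _ sUW) // prj_id.
  + by rewrite mulmxA (prj_id _ sTW) // prj_id.
Qed.

Lemma abstract_noniso i j : i != j -> ~ mx_iso rG (W i) (W j).
Proof.
move=> ij [f unitf homf defWf].
have sWf : (W i *m f <= W j)%MS by rewrite defWf.
pose Fm := P i *m f *m P j.
pose Q (a : option I) := match a with Some l => P l | None => Fm end.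
have cQ : forall a, centgmx rG (Q a).
  case=> [l|] /=; first exact: Pcent.
  apply/centgmxP => x Gx; rewrite -[LHS]mul1mx -[RHS]mul1mx.
  apply: (eq_on (full i)); rewrite !mulmxA.
    rewrite PW (prj_id _ sWf) ?dxW //.
    rewrite (prj_id _ (mxmoduleP (modW i) x Gx)) ?dxW //.
    rewrite (hom_mxP homf x Gx) (prj_id) ?dxW //.
    exact: mxmodule_trans (modW j) Gx sWf.
  by rewrite (PR i) !mul0mx (prj_0 (dxW i) (mxmoduleP (modR i) x Gx)) !mul0mx.
have hcard : (#|I| < #|{: option I}|)%N by rewrite card_option.
have [c [a nza] hc] := @dimC (option I) Q hcard cQ.
pose X (a : option I) := match a with Some l => W l | None => W i end.
pose Y (a : option I) := match a with Some l => P l | None => P j end.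
suff : c a = 0 by move/eqP; rewrite (negbTE nza).
apply: (@indep _ Q X Y c) => //.
- move=> [l|] [l'|] //= ne.
  + have ll : l != l' by apply: contraNneq ne => ->.
    by rewrite (PWj (i := l') (j := l)) ?mul0mx // eq_sym.
  + rewrite /Fm; case: (eqVneq l i) => [li|li]; last first.
      by rewrite !mulmxA (PWj li) !mul0mx.
    by subst l; rewrite -!mulmxA (PP (i := j) (j := i)) ?mulmx0 // eq_sym.
  + case: (eqVneq l' i) => [li|li]; last first.
      by rewrite (PWj (i := l') (j := i)) ?mul0mx // eq_sym.
    subst l'; rewrite (PW i) (prj_0 (dxW j)) //.
    by rewrite sWR.
- move=> [l|] /=.
  + by rewrite !(PW l).
  + rewrite /Fm !mulmxA (PW i) (prj_id (dxW j) sWf).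
    rewrite (prj_id (dxW j) sWf).
    by rewrite (eqmx_eq0 defWf) nzW.
Qed.

End Abstract.

Section RingFacts.
Variable R : finComUnitRingType.

Definition pr (a : R) : {set R} := [set r * a | r : R].

Lemma mem_pr (a : R) : a \in pr a.
Proof. by apply/imsetP; exists 1; rewrite ?mul1r. Qed.

Lemma prP (a b : R) : reflect (exists r, b = r * a) (b \in pr a).
Proof. by apply: (iffP imsetP) => [[r _ ->]|[r ->]]; exists r. Qed.

Lemma pr_ideal (a : R) : is_ideal (pr a).
Proof.
apply/and3P; split.
- by apply/prP; exists 0; rewrite mul0r.
- apply/forall_inP => x /prP[r ->]; apply/forall_inP => y /prP[s ->].
  by apply/prP; exists (r + s); rewrite mulrDl.
- apply/forallP => r; apply/forall_inP => x /prP[s ->].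
  by apply/prP; exists (r * s); rewrite mulrA.
Qed.

Lemma idealM (I : {set R}) (r x : R) : is_ideal I -> x \in I -> r * x \in I.
Proof. by case/and3P=> _ _ /forallP/(_ r)/forall_inP; apply. Qed.

Lemma ideal0 (I : {set R}) : is_ideal I -> 0 \in I.
Proof. by case/and3P. Qed.

Lemma ideal_unitM (I : {set R}) (e x : R) : is_ideal I -> e \is a GRing.unit ->
  (e * x \in I) = (x \in I).
Proof.
move=> hI ue; apply/idP/idP => h; last exact: idealM.
by rewrite -(mulKr ue x); apply: idealM.
Qed.

Lemma pr_unit (a e : R) : e \is a GRing.unit -> pr (e * a) = pr a.
Proof.
move=> ue; apply/setP => x; apply/prP/prP => [[r ->]|[r ->]].
  by exists (r * e); rewrite mulrA.
by exists (r / e); rewrite mulrA divrK.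
Qed.

Hypothesis uni : uniserial R.

Lemma nonunitD (a b : R) : a \isn't a GRing.unit -> b \isn't a GRing.unit ->
  a + b \isn't a GRing.unit.
Proof.
wlog: a b / pr a \subset pr b.
  move=> hw na nb; have [/hw|/hw] := uni (pr_ideal a) (pr_ideal b).
    by apply.
  by rewrite addrC; apply.
move=> /subsetP/(_ a (mem_pr a))/prP[r ->] _ nb.
have -> : r * b + b = (r + 1) * b by rewrite mulrDl mul1r.
by rewrite unitrM negb_and nb orbT.
Qed.

Lemma nonunitM (a x : R) : a \isn't a GRing.unit -> x * a \isn't a GRing.unit.
Proof. by move=> na; rewrite unitrM negb_and na orbT. Qed.

Lemma unit_1sub (x : R) : x \isn't a GRing.unit -> 1 - x \is a GRing.unit.
Proof.
move=> nx; apply/idPn => n1.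
have := nonunitD n1 nx; rewrite subrK.
by rewrite unitr1.
Qed.

Lemma unimod_unit (s t x y : R) : s * x + t * y = 1 -> t \isn't a GRing.unit ->
  s \is a GRing.unit.
Proof.
move=> h nt; apply/idPn => ns.
have := nonunitD (nonunitM x ns) (nonunitM y nt).
by rewrite [x * s]mulrC [y * t]mulrC h unitr1.
Qed.

Lemma pr_eq (a b : R) : pr a = pr b -> exists2 e, e \is a GRing.unit & b = e * a.
Proof.
move=> e.
have /prP[x hx] : b \in pr a by rewrite e mem_pr.
have /prP[y hy] : a \in pr b by rewrite -e mem_pr.
have [ux|nx] := boolP (x \is a GRing.unit); first by exists x.
have h1 : a * (y * x) = a by rewrite mulrC -mulrA -hx -hy.
have h0 : a * (1 - y * x) = 0 by rewrite mulrBr mulr1 h1 subrr.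
have ua : a = 0.
  by rewrite -[a](mulrK (unit_1sub (nonunitM y nx))) h0 mul0r.
exists 1; first exact: unitr1.
by rewrite hx ua !mulr0.
Qed.

Lemma ideal1 : is_ideal [set: R].
Proof.
apply/and3P; split; rewrite ?inE //.
  by apply/forall_inP => x _; apply/forall_inP => y _; rewrite inE.
by apply/forallP => r; apply/forall_inP => x _; rewrite inE.
Qed.

Lemma ideal_0 : is_ideal [set (0 : R)].
Proof.
apply/and3P; split; rewrite ?inE //.
  by apply/forall_inP => x; rewrite inE => /eqP->; apply/forall_inP => y;
     rewrite inE => /eqP->; rewrite inE addr0.
by apply/forallP => r; apply/forall_inP => x; rewrite !inE => /eqP->; rewrite mulr0.
Qed.

Lemma card_ideals k : ring_length R k ->
  (#|[set I : {set R} | is_ideal I]| <= k.+1)%N.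
Proof.
case=> _ hmax.
set Id := [set I : {set R} | is_ideal I].
pose le (A B : {set R}) := (#|A| <= #|B|)%N.
have tot : total le by move=> A B; apply: leq_total.
pose s := sort le (enum Id).
have ss : sorted le s := sort_sorted tot _.
have us : uniq s by rewrite sort_uniq enum_uniq.
have sz : size s = #|Id| by rewrite size_sort cardE.
have mems i : (i < size s)%N -> is_ideal (nth set0 s i).
  by move=> lt; have := mem_nth set0 lt; rewrite mem_sort mem_enum inE.
rewrite -sz; case Es : (size s) => [//|m].
have : strict_ideal_chain m (nth set0 s).
  split=> [i lei|i lti]; first by apply: mems; rewrite Es ltnS.
  have lt1 : (i.+1 < size s)%N by rewrite Es ltnS.
  have lt0 : (i < size s)%N by apply: ltnW.
  have hle := (sortedP set0 ss) i lt1.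
  have neq : nth set0 s i != nth set0 s i.+1.
    by rewrite nth_uniq // neq_ltn ltnSn.
  have [sub|sub] := uni (mems _ lt0) (mems _ lt1).
    by rewrite properEneq neq sub.
  by move: neq; rewrite eq_sym eqEcard sub; rewrite /le in hle; rewrite hle.
by move/hmax; rewrite ltnS.
Qed.

Lemma chain_mono k (c : nat -> {set R}) : strict_ideal_chain k c ->
  forall i j, (i <= j <= k)%N -> c i \subset c j.
Proof.
case=> _ hp i j /andP[]; elim: j => [|j IH]; first by rewrite leqn0 => /eqP->.
rewrite leq_eqVlt => /orP[/eqP-> //|lt] lek.
apply: subset_trans (IH lt (ltnW lek)) _.
by have /properP[] := hp j lek.
Qed.

Lemma chain_ends k (c : nat -> {set R}) : ring_length R k -> strict_ideal_chain k c ->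
  c 0%N = [set 0] /\ c k = [set: R].
Proof.
move=> [_ hmax] hc; have [hi hp] := hc; split.
  apply/eqP; apply/idPn => ne.
  pose c' i := if i is j.+1 then c j else [set (0 : R)].
  have : strict_ideal_chain k.+1 c'.
    split=> [[|i] lei|[|i] lti] /=; first exact: ideal_0.
    - by apply: hi.
    - rewrite properEneq eq_sym ne; apply/subsetP => x; rewrite inE => /eqP->.
      by apply: ideal0; apply: hi.
    - by apply: hp.
  by move/hmax; rewrite ltnn.
apply/eqP; apply/idPn => ne.
pose c' i := if (i <= k)%N then c i else [set: R].
have : strict_ideal_chain k.+1 c'.
  split=> [i lei|i lti]; rewrite /c'.
    case: ifP => h; [exact: hi | exact: ideal1].
  rewrite ltnS in lti; rewrite lti; case: ltnP => [lt|le].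
    by apply: hp.
  have -> : i = k by apply/eqP; rewrite eqn_leq lti le.
  by rewrite properEneq ne subsetT.
by move/hmax; rewrite ltnn.
Qed.

End RingFacts.

Section Geom.
Variable R : finComUnitRingType.

Lemma I2P (j : 'I_2) : j = 0 \/ j = 1.
Proof. by case: j => [[|[|//]]] Hj; [left|right]; apply: val_inj. Qed.

Lemma big_ord2 (V : nmodType) (F : 'I_2 -> V) : \sum_(i < 2) F i = F 0 + F 1.
Proof.
rewrite !big_ord_recl big_ord0 addr0.
by congr (F _ + F _); apply: val_inj.
Qed.

Definition rv2 (a b : R) : 'rV[R]_2 := \row_(j < 2) if (j : nat) == 0%N then a else b.
Definition mx2 (p q r s : R) : 'M[R]_2 :=
  \matrix_(i < 2, j < 2) if (i : nat) == 0%N then (if (j : nat) == 0%N then p else q)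
                         else (if (j : nat) == 0%N then r else s).

Lemma rv2E (u : 'rV[R]_2) : u = rv2 (u 0 0) (u 0 1).
Proof.
apply/rowP => j; rewrite !mxE; case: (I2P j) => -> //.
Qed.

Lemma rv2_0 a b : rv2 a b 0 0 = a. Proof. by rewrite mxE. Qed.
Lemma rv2_1 a b : rv2 a b 0 1 = b. Proof. by rewrite mxE. Qed.

Lemma rv2_eq a b c d : rv2 a b = rv2 c d -> a = c /\ b = d.
Proof.
move=> e; split; first by rewrite -(rv2_0 a b) e rv2_0.
by rewrite -(rv2_1 a b) e rv2_1.
Qed.

Lemma mul_rv2 a b p q r s :
  rv2 a b *m mx2 p q r s = rv2 (a * p + b * r) (a * q + b * s).
Proof.
by apply/rowP => j; rewrite !mxE big_ord2 !mxE; case: (I2P j) => ->.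
Qed.

Lemma mx2E (A : 'M[R]_2) : A = mx2 (A 0 0) (A 0 1) (A 1 0) (A 1 1).
Proof.
by apply/matrixP => i j; rewrite !mxE; case: (I2P i) => ->; case: (I2P j) => ->.
Qed.

Lemma det_mx2 p q r s : \det (mx2 p q r s) = p * s - q * r.
Proof.
rewrite (expand_det_row _ 0) big_ord2 /cofactor !det_mx11 !mxE /=.
rewrite !expr0 !expr1 mul1r mulN1r /=.
by rewrite mulrN.
Qed.

Definition det2 (u v : 'rV[R]_2) := u 0 0 * v 0 1 - u 0 1 * v 0 0.

Lemma det2_rv2 a b c d : det2 (rv2 a b) (rv2 c d) = a * d - b * c.
Proof. by rewrite /det2 !rv2_0 !rv2_1. Qed.

Lemma det2M (u v : 'rV[R]_2) (A : 'M[R]_2) :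
  det2 (u *m A) (v *m A) = det2 u v * \det A.
Proof.
rewrite (rv2E u) (rv2E v) (mx2E A) !mul_rv2 det2_rv2 det_mx2 det2_rv2.
by ring.
Qed.

Lemma det2Zl (a : R) (u v : 'rV[R]_2) : det2 (a *: u) v = a * det2 u v.
Proof. by rewrite /det2 !mxE; ring. Qed.
Lemma det2Zr (a : R) (u v : 'rV[R]_2) : det2 u (a *: v) = a * det2 u v.
Proof. by rewrite /det2 !mxE; ring. Qed.
Lemma det2uu (u : 'rV[R]_2) : det2 u u = 0.
Proof. by rewrite /det2 mulrC subrr. Qed.

Lemma unimodP (u : 'rV[R]_2) :
  reflect (exists x y, u 0 0 * x + u 0 1 * y = 1) (unimodular u).
Proof.
apply: (iffP existsP) => [[w /eqP hw]|[x [y h]]].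
  exists (w 0 0), (w 1 0); move/matrixP: hw => /(_ 0 0).
  by rewrite !mxE big_ord2 /=.
exists (\col_(i < 2) if (i : nat) == 0%N then x else y).
apply/eqP/matrixP => i j; rewrite !ord1 !mxE big_ord2 !mxE /=.
by rewrite h.
Qed.

Lemma line_mulmx (u : 'rV[R]_2) (A : 'M[R]_2) :
  line (u *m A) = [set x *m A | x in line u].
Proof.
by rewrite /line -imset_comp; apply: eq_imset => r /=; rewrite scalemxAl.
Qed.

Lemma line_mulmx_eq (u v : 'rV[R]_2) (A : 'M[R]_2) :
  line u = line v -> line (u *m A) = line (v *m A).
Proof. by rewrite !line_mulmx => ->. Qed.

Lemma mem_line (u : 'rV[R]_2) : u \in line u.
Proof. by apply/imsetP; exists 1; rewrite ?scale1r. Qed.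

Lemma lineP (u v : 'rV[R]_2) : reflect (exists r, v = r *: u) (v \in line u).
Proof. by apply: (iffP imsetP) => [[r _ ->]|[r ->]]; exists r. Qed.

Lemma line_scale (e : R) (u : 'rV[R]_2) : e \is a GRing.unit -> line (e *: u) = line u.
Proof.
move=> ue; apply/setP => x; apply/lineP/lineP => [[r ->]|[r ->]].
  by exists (r * e); rewrite scalerA.
by exists (r / e); rewrite scalerA divrK.
Qed.

Lemma unimod_dot (u : 'rV[R]_2) : unimodular u -> exists w : 'cV[R]_2, u *m w = 1%:M.
Proof. by case/existsP => w /eqP; exists w. Qed.

Lemma scale_unimod_eq (c : R) (u : 'rV[R]_2) : unimodular u -> c *: u = u -> c = 1.
Proof.
case/unimodP => x [y h] e.
have : (c *: u) 0 0 * x + (c *: u) 0 1 * y = 1 by rewrite e.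
by rewrite !mxE -!mulrA -mulrDr h mulr1.
Qed.

Lemma line_eq_unit (u v : 'rV[R]_2) : unimodular u -> unimodular v -> line u = line v ->
  exists2 e, e \is a GRing.unit & v = e *: u.
Proof.
move=> uu uv e.
have /lineP[r hr] : v \in line u by rewrite e mem_line.
have /lineP[s hs] : u \in line v by rewrite -e mem_line.
have : (s * r) *: u = u by rewrite -scalerA -hr -hs.
move/(scale_unimod_eq uu) => sr.
exists r => //; apply/unitrP; exists s; split => //; by rewrite mulrC.
Qed.

Lemma line_det0 (u v : 'rV[R]_2) : unimodular u -> unimodular v -> det2 u v = 0 ->
  line u = line v.
Proof.
case/unimodP => x [y h] /unimodP [x' [y' h']] d0.
set c := v 0 0 * x + v 0 1 * y.
have hv : v = c *: u.
  rewrite (rv2E v) (rv2E u); apply/rowP => j; rewrite !mxE.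
  case: (I2P j) => -> /=; apply/eqP; rewrite -subr_eq0.
  - have -> : v 0 0 - c * u 0 0 = v 0 0 * (1 - (u 0 0 * x + u 0 1 * y)) - y * det2 u v.
      by rewrite /c /det2; ring.
    by rewrite h d0 subrr !mulr0 subr0.
  - have -> : v 0 1 - c * u 0 1 = v 0 1 * (1 - (u 0 0 * x + u 0 1 * y)) + x * det2 u v.
      by rewrite /c /det2; ring.
    by rewrite h d0 subrr !mulr0 addr0.
have uc : c \is a GRing.unit.
  apply/unitrPr; exists (u 0 0 * x' + u 0 1 * y').
  move: h'; rewrite hv !mxE => <-; ring.
by rewrite hv line_scale.
Qed.

End Geom.

Section Orbit.
Variable R : finComUnitRingType.
Hypothesis uni : uniserial R.

Definition PRel (u u' w w' : 'rV[R]_2) :=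
  exists2 A : 'M[R]_2, A \in unitmx & line (u *m A) = line w /\ line (u' *m A) = line w'.

Lemma PR_sym u u' w w' : PRel u u' w w' -> PRel w w' u u'.
Proof.
case=> A uA [e1 e2]; exists (invmx A); first by rewrite unitmx_inv.
rewrite -(line_mulmx_eq (invmx A) e1) -(line_mulmx_eq (invmx A) e2).
by rewrite !mulmxK.
Qed.

Lemma PR_trans u u' v v' w w' : PRel u u' v v' -> PRel v v' w w' -> PRel u u' w w'.
Proof.
case=> A uA [e1 e2] [B uB [f1 f2]]; exists (A *m B); first by rewrite unitmx_mul uA.
by rewrite !mulmxA (line_mulmx_eq B e1) (line_mulmx_eq B e2).
Qed.

Lemma PR_eq u u' w w' A : A \in unitmx -> u *m A = w -> u' *m A = w' -> PRel u u' w w'.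
Proof. by move=> uA e1 e2; exists A => //; rewrite e1 e2. Qed.

Lemma unimod_mul (u : 'rV[R]_2) A : A \in unitmx -> unimodular u -> unimodular (u *m A).
Proof.
move=> uA /existsP[w /eqP hw]; apply/existsP; exists (invmx A *m w).
by rewrite !mulmxA mulmxK // hw.
Qed.

Definition e1 : 'rV[R]_2 := rv2 1 0.
Definition e2 : 'rV[R]_2 := rv2 0 1.

Lemma nf (u u' : 'rV[R]_2) : unimodular u -> unimodular u' ->
  if det2 u u' \is a GRing.unit then PRel u u' e1 e2
  else exists2 t, pr t = pr (det2 u u') & PRel u u' e1 (rv2 1 t).
Proof.
move=> hu hu'; have := hu; case/unimodP => x [y hxy].
pose A := mx2 x (- u 0 1) y (u 0 0).
have dA : \det A = 1 by rewrite det_mx2 -hxy; ring.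
have uA : A \in unitmx by rewrite unitmxE dA unitr1.
have uAe : u *m A = e1.
  rewrite (rv2E u) mul_rv2 /e1 -hxy; congr rv2; ring.
set v := u' *m A.
have dv : det2 u u' = v 0 1.
  by rewrite -[det2 u u']mulr1 -dA -det2M uAe /e1 /det2 rv2_0 rv2_1; ring.
have hv := unimod_mul uA hu'.
set s := v 0 0; set t := v 0 1.
rewrite dv; case: ifP => ut.
  pose B := mx2 1 0 (- s / t) (t^-1).
  have uB : B \in unitmx by rewrite unitmxE det_mx2 mul1r mul0r subr0 unitrV.
  apply: (@PR_trans u u' e1 v e1 e2); first by apply: PR_eq uA uAe _.
  apply: PR_eq uB _ _.
    by rewrite /e1 mul_rv2; congr rv2; ring.
  rewrite (rv2E v) mul_rv2 /e2 -/s -/t; congr rv2.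
    by rewrite mulr1 mulrCA mulrV // mulr1 addrN.
  by rewrite mulr0 add0r mulrV.
have us : s \is a GRing.unit.
  case/unimodP: hv => x' [y' h']; apply: (unimod_unit uni h'); by rewrite ut.
exists (s^-1 * t); first by rewrite pr_unit // unitrV.
exists A => //; split; first by rewrite uAe.
rewrite -/v (rv2E v) -/s -/t -[in RHS](line_scale (rv2 _ _) us); congr line.
apply/rowP => j; rewrite !mxE; case: (I2P j) => -> /=; first by rewrite mulr1.
by rewrite mulrA mulrV // mul1r.
Qed.

Lemma pr_unitE (a b : R) : pr a = pr b ->
  (a \is a GRing.unit) = (b \is a GRing.unit).
Proof. by case/(pr_eq uni) => e ue ->; rewrite unitrM ue. Qed.

Lemma orbit_vec (u u' w w' : 'rV[R]_2) : unimodular u -> unimodular u' ->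
  unimodular w -> unimodular w' -> pr (det2 u u') = pr (det2 w w') ->
  PRel u u' w w'.
Proof.
move=> hu hu' hw hw' e.
have := nf hu hu'; have := nf hw hw'; rewrite -(pr_unitE e).
case: ifP => _.
  by move=> h2 h1; apply: PR_trans h1 (PR_sym h2).
move=> [t' et' h2] [t et h1].
have [c uc ec] := pr_eq uni (etrans et (etrans e (esym et'))).
apply: PR_trans h1 _; apply: PR_trans _ (PR_sym h2).
pose C := mx2 1 0 0 c.
have uC : C \in unitmx by rewrite unitmxE det_mx2 mul1r mul0r subr0.
apply: PR_eq uC _ _; rewrite /e1 mul_rv2; congr rv2; try ring.
by rewrite ec; ring.
Qed.

End Orbit.

Section Rep.
Variable R : finComUnitRingType.
Hypothesis uni : uniserial R.
Variable K : fieldType.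

Local Notation n := (nTits R).
Local Notation gT := {'GL_2[R]}.
Local Notation Lv i := (enum_val i : {set 'rV[R]_2}).

Lemma e1_unimod : unimodular (e1 R).
Proof. by apply/unimodP; exists 1, 0; rewrite /e1 rv2_0 rv2_1; ring. Qed.

Lemma line_Tits (u : 'rV[R]_2) : unimodular u -> line u \in Tits R.
Proof. by move=> hu; rewrite inE; apply/existsP; exists u; rewrite hu eqxx. Qed.

Definition t0 := line (e1 R).
Lemma t0_Tits : t0 \in Tits R. Proof. exact: line_Tits e1_unimod. Qed.

Definition ix (L : {set 'rV[R]_2}) : 'I_n := enum_rank_in t0_Tits L.
Lemma ixK L : L \in Tits R -> Lv (ix L) = L.
Proof. by move=> h; rewrite /ix enum_rankK_in. Qed.
Lemma Lv_Tits (i : 'I_n) : Lv i \in Tits R.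
Proof. exact: enum_valP. Qed.
Lemma Lv_ix (i : 'I_n) : ix (Lv i) = i.
Proof. by apply: enum_val_inj; rewrite ixK ?Lv_Tits. Qed.

Lemma n_gt0 : (0 < n)%N.
Proof. by rewrite /nTits; apply/card_gt0P; exists t0; exact: t0_Tits. Qed.

Definition gen (L : {set 'rV[R]_2}) : 'rV[R]_2 :=
  if [pick u | unimodular u && (L == line u)] is Some u then u else 0.

Lemma genP L : L \in Tits R -> unimodular (gen L) /\ L = line (gen L).
Proof.
rewrite inE => /existsP[u hu]; rewrite /gen; case: pickP => [v /andP[hv /eqP ->] //|].
by move/(_ u); rewrite hu.
Qed.

Lemma lineAct_inv (g : gT) L : lineAct g^-1 (lineAct g L) = L.
Proof. by rewrite -lineActM mulgV lineAct1. Qed.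
Lemma lineAct_invr (g : gT) L : lineAct g (lineAct g^-1 L) = L.
Proof. by rewrite -lineActM mulVg lineAct1. Qed.

Definition rG := permRep R K.

Lemma rowact m (B : 'M[K]_(m, n)) (g : gT) i j :
  (B *m rG g) i j = B i (ix (lineAct g^-1 (Lv j))).
Proof.
rewrite !mxE (bigD1 (ix (lineAct g^-1 (Lv j)))) //= big1 ?addr0.
  by rewrite /= mxE ixK ?lineAct_invr ?eqxx ?mulr1 //; apply: lineAct_Tits; apply: Lv_Tits.
move=> l hl; rewrite /= mxE; case: eqP => [e|_]; last by rewrite mulr0.
case/eqP: hl; apply: enum_val_inj; rewrite ixK; last by apply: lineAct_Tits; apply: Lv_Tits.
by rewrite -e lineAct_inv.
Qed.

Lemma colact m (B : 'M[K]_(n, m)) (g : gT) i j :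
  (rG g *m B) i j = B (ix (lineAct g (Lv i))) j.
Proof.
rewrite !mxE (bigD1 (ix (lineAct g (Lv i)))) //= big1 ?addr0.
  by rewrite /= mxE ixK ?eqxx ?mul1r //; apply: lineAct_Tits; apply: Lv_Tits.
move=> l hl; rewrite /= mxE; case: eqP => [e|_]; last by rewrite mul0r.
by case/eqP: hl; rewrite e Lv_ix.
Qed.

Lemma cent_inv (A : 'M[K]_n) (g : gT) (i j : 'I_n) : centgmx rG A ->
  A (ix (lineAct g (Lv i))) (ix (lineAct g (Lv j))) = A i j.
Proof.
move/centgmxP/(_ g (in_setT g)) => e.
move/matrixP: e => /(_ i (ix (lineAct g (Lv j)))).

rewrite rowact colact ixK ?lineAct_inv ?Lv_ix //.
by apply: lineAct_Tits; apply: Lv_Tits.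
Qed.

Lemma GL_of (A : 'M[R]_2) : A \in unitmx -> exists g : gT, GLval g = A.
Proof. by move=> uA; exists (Sub A uA : gT). Qed.

Definition tinv (i j : 'I_n) := pr (det2 (gen (Lv i)) (gen (Lv j))).

Lemma orbit_idx (i j i' j' : 'I_n) : tinv i j = tinv i' j' ->
  exists g : gT, lineAct g (Lv i) = Lv i' /\ lineAct g (Lv j) = Lv j'.
Proof.
move=> e.
have [hi ei] := genP (Lv_Tits i); have [hj ej] := genP (Lv_Tits j).
have [hi' ei'] := genP (Lv_Tits i'); have [hj' ej'] := genP (Lv_Tits j').
have [A uA [f1 f2]] := orbit_vec uni hi hj hi' hj' e.
have [g hg] := GL_of uA; exists g.
by rewrite ei ej ei' ej' !lineAct_line hg.
Qed.

Lemma transitive_idx (i j : 'I_n) : exists g : gT, lineAct g (Lv i) = Lv j.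
Proof.
have e : tinv i i = tinv j j by rewrite /tinv !det2uu.
have [g [h _]] := orbit_idx e.
by exists g.
Qed.

Definition trel (I : {set R}) (i j : 'I_n) := det2 (gen (Lv i)) (gen (Lv j)) \in I.

Lemma gen_act (g : gT) L : L \in Tits R ->
  exists2 e, e \is a GRing.unit & gen (lineAct g L) = e *: (gen L *m GLval g).
Proof.
move=> hL; have [hu eu] := genP hL.
have hL' : lineAct g L \in Tits R by apply: lineAct_Tits.
have [hv ev] := genP hL'.
apply: line_eq_unit => //.
  by apply: unimod_mul => //; exact: (GL_unit g).
by rewrite -ev [in RHS]eu lineAct_line.
Qed.

Lemma rel_inv (I : {set R}) (g : gT) (i j : 'I_n) : is_ideal I ->
  trel I (ix (lineAct g (Lv i))) (ix (lineAct g (Lv j))) = trel I i j.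
Proof.
move=> hI; rewrite /trel !ixK; try by apply: lineAct_Tits; apply: Lv_Tits.
have [e ue ->] := gen_act g (Lv_Tits i).
have [f uf ->] := gen_act g (Lv_Tits j).
rewrite det2Zl det2Zr det2M mulrA ideal_unitM ?unitrM ?ue ?uf //.
rewrite mulrC ideal_unitM //; have := GL_unitmx g; by rewrite unitmxE.
Qed.

Lemma rel_refl (I : {set R}) (i : 'I_n) : is_ideal I -> trel I i i.
Proof. by move=> hI; rewrite /trel det2uu ideal0. Qed.

Lemma rel_sym (I : {set R}) (i j : 'I_n) : is_ideal I -> trel I i j -> trel I j i.
Proof.
move=> hI; rewrite /trel => h.
have -> : det2 (gen (Lv j)) (gen (Lv i)) = (-1) * det2 (gen (Lv i)) (gen (Lv j)).
  by rewrite /det2; ring.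
exact: idealM.
Qed.

Lemma idealD (I : {set R}) (x y : R) : is_ideal I -> x \in I -> y \in I -> x + y \in I.
Proof. by case/and3P=> _ /forall_inP/(_ x) h _ hx hy; move/(_ hx)/forall_inP: h; apply. Qed.

Lemma rel_trans (I : {set R}) (i j l : 'I_n) : is_ideal I -> trel I i j -> trel I j l -> trel I i l.
Proof.
move=> hI; rewrite /trel => h1 h2.
have [hj _] := genP (Lv_Tits j).
case/unimodP: hj => x [y hxy].
set u := gen (Lv i); set v := gen (Lv j); set w := gen (Lv l).
have -> : det2 u w = (u 0 0 * x + u 0 1 * y) * det2 v w + (w 0 0 * x + w 0 1 * y) * det2 u v.
  rewrite -[det2 u w]mulr1 -hxy /det2; ring.
by apply: idealD => //; apply: idealM.
Qed.

End Rep.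

Section Spaces.
Variable R : finComUnitRingType.
Hypothesis uni : uniserial R.
Variable K : fieldType.
Hypothesis HK : [pchar K] =i pred0.

Local Notation n := (nTits R).
Local Notation gT := {'GL_2[R]}.
Local Notation Lv i := (enum_val i : {set 'rV[R]_2}).
Local Notation rG := (rG R K).
Local Notation S := (Steinberg R K).

Lemma nK : (n%:R : K) != 0.
Proof.
by rewrite ((pcharf0P K).1 HK n) -lt0n n_gt0.
Qed.

Lemma mx11_eq0 (M : 'M[K]_1) : (M == 0) = (M 0 0 == 0).
Proof.
apply/eqP/eqP => [->|h]; first by rewrite mxE.
by apply/matrixP => a b; rewrite !ord1 h mxE.
Qed.

Definition dcol (i j : 'I_n) : 'M[K]_(n, 1) := delta_mx i 0 - delta_mx j 0.

Lemma vdcol (v : 'rV[K]_n) i j : (v *m dcol i j == 0) = (v 0 i == v 0 j).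
Proof.
by rewrite mulmxBr -!colE mx11_eq0 !mxE subr_eq0.
Qed.

Definition Vs (I : {set R}) : 'M[K]_n :=
  (\bigcap_(p : 'I_n * 'I_n | trel I p.1 p.2) kermx (dcol p.1 p.2))%MS.

Lemma memV I (v : 'rV[K]_n) :
  reflect (forall i j, trel I i j -> v 0 i = v 0 j) (v <= Vs I)%MS.
Proof.
apply: (iffP sub_bigcapmxP) => h.
  by move=> i j r; have := h (i, j) r; rewrite sub_kermx vdcol => /eqP.
by move=> [i j] /= r; rewrite sub_kermx vdcol (h _ _ r).
Qed.

Lemma Vs_module I : is_ideal I -> mxmodule rG (Vs I).
Proof.
move=> hI; apply/mxmoduleP => g _; apply/row_subP => r; rewrite row_mul.
apply/memV => i j hij; rewrite !rowact.
have /memV := row_sub r (Vs I); apply.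
by rewrite rel_inv.
Qed.

Lemma Vs_mono (I J : {set R}) : I \subset J -> (Vs J <= Vs I)%MS.
Proof.
move=> sIJ; apply/row_subP => r; apply/memV => i j hij.
have /memV := row_sub r (Vs J); apply.
exact: (subsetP sIJ).
Qed.

Definition ones : 'rV[K]_n := const_mx 1.
Lemma ones_Vs I : (ones <= Vs I)%MS.
Proof. by apply/memV => i j _; rewrite !mxE. Qed.

Definition cst : 'M[K]_n := const_mx 1.

Lemma cst_act g : cst *m rG g = cst.
Proof. by apply/matrixP => i j; rewrite rowact !mxE. Qed.

Lemma cst_module : mxmodule rG cst.
Proof. by apply/mxmoduleP => g _; rewrite cst_act. Qed.

Lemma S_module : mxmodule rG S.
Proof.
apply/mxmoduleP => g _; rewrite /Steinberg sub_kermx -mulmxA.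
have -> : rG g *m (const_mx 1 : 'M[K]_(n, 1)) = const_mx 1.
  by apply/matrixP => i j; rewrite colact !mxE.
by rewrite mulmx_ker.
Qed.

Lemma memS (v : 'rV[K]_n) : (v <= S)%MS = (\sum_j v 0 j == 0).
Proof.
rewrite /Steinberg sub_kermx mx11_eq0 mxE.
by under eq_bigr do rewrite mxE mulr1.
Qed.

Lemma sum_const_row (a : K) : \sum_(j < n) a = a * n%:R.
Proof. by rewrite sumr_const card_ord mulr_natr. Qed.

Lemma cst_S0 : (cst :&: S = 0)%MS.
Proof.
apply/eqP/rowV0P => v; rewrite sub_capmx => /andP[/submxP[x ->] hS].
set a := \sum_l x 0 l.
have ent j : (x *m cst) 0 j = a by rewrite !mxE; apply: eq_bigr => l _; rewrite mxE mulr1.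
move: hS; rewrite memS (eq_bigr (fun=> a)) // sum_const_row mulf_eq0 (negbTE nK) orbF.
move/eqP => a0; apply/rowP => j; by rewrite ent a0 mxE.
Qed.

Lemma redG : mx_completely_reducible rG 1%:M.
Proof.
apply: mx_Maschke_pchar; apply/(pnatP _ (cardG_gt0 _)) => p pp _.
by rewrite inE /= HK.
Qed.

(* fixed vectors are constant, hence 0 in S *)
Lemma fixed_S0 (v : 'rV[K]_n) : (v <= S)%MS ->
  (forall g, v *m rG g = v) -> v = 0.
Proof.
move=> hS hfix.
have const j : v 0 j = v 0 (ix (t0 R)).
  have [g hg] := transitive_idx uni (ix (t0 R)) j.
  have := hfix g; move/rowP/(_ j); rewrite rowact -hg lineAct_inv Lv_ix => h.
  by rewrite h.
move: hS; rewrite memS (eq_bigr (fun=> v 0 (ix (t0 R)))) // sum_const_row.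
rewrite mulf_eq0 (negbTE nK) orbF => /eqP h.
by apply/rowP => j; rewrite const h mxE.
Qed.

End Spaces.

Section Chain.
Variable R : finComUnitRingType.
Hypothesis uni : uniserial R.
Variable K : fieldType.
Hypothesis HK : [pchar K] =i pred0.
Variable k : nat.
Hypothesis hlen : ring_length R k.
Variable c : nat -> {set R}.
Hypothesis hc : strict_ideal_chain k c.

Local Notation n := (nTits R).
Local Notation gT := {'GL_2[R]}.
Local Notation Lv i := (enum_val i : {set 'rV[R]_2}).
Local Notation rG := (rG R K).
Local Notation S := (Steinberg R K).

Definition cc i := c (minn i k).
Lemma cc_ideal i : is_ideal (cc i).
Proof. by case: hc => h _; apply: h; rewrite geq_minr. Qed.

Definition Y i : 'M[K]_n := (S :&: Vs K (cc i))%MS.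

Lemma Y_module i : mxmodule rG (Y i).
Proof. by apply: capmx_module; [apply: S_module | apply: Vs_module; apply: cc_ideal]. Qed.

Lemma Y_sub i : (Y i.+1 <= Y i)%MS.
Proof.
apply: capmxS => //; apply: Vs_mono; apply: (chain_mono hc).
by apply/andP; split; lia.
Qed.
Lemma cc0 : cc 0 = [set 0].
Proof. by rewrite /cc min0n; case: (chain_ends hlen hc). Qed.
Lemma cck : cc k = [set: R].
Proof. by rewrite /cc minnn; case: (chain_ends hlen hc). Qed.

Lemma Y0 : (S <= Y 0)%MS.
Proof.
rewrite sub_capmx submx_refl /=; apply/row_subP => r; apply/memV => i j.
rewrite cc0 /trel inE => /eqP d0.
have [hi ei] := genP (Lv_Tits i); have [hj ej] := genP (Lv_Tits j).
have e : Lv i = Lv j by rewrite ei ej; apply: line_det0.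
by rewrite (enum_val_inj e).
Qed.

Lemma Yk : Y k = 0.
Proof.
apply/eqP/rowV0P => v; rewrite sub_capmx => /andP[hS /memV hV].
apply: (fixed_S0 uni HK hS) => g; apply/rowP => j; rewrite rowact.
by apply: hV; rewrite cck /trel inE.
Qed.

Lemma rv2_1_unimod (a : R) : unimodular (rv2 1 a).
Proof. by apply/unimodP; exists 1, 0; rewrite rv2_0 rv2_1; ring. Qed.

Lemma trel_e1 (I : {set R}) (a : R) : is_ideal I ->
  trel I (ix (t0 R)) (ix (line (rv2 1 a))) = (a \in I).
Proof.
move=> hI; rewrite /trel !ixK ?t0_Tits ?line_Tits ?rv2_1_unimod //.
have [h0 e0] := genP (t0_Tits R).
have [h1 ee1] := genP (line_Tits (rv2_1_unimod a)).
have [x ux ->] := line_eq_unit (e1_unimod R) h0 e0.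
have [y uy ->] := line_eq_unit (rv2_1_unimod a) h1 ee1.
rewrite det2Zl det2Zr /e1 det2_rv2 !ideal_unitM //.
by rewrite mul1r mul0r subr0.
Qed.

Lemma Y_strict i : (i < k)%N -> exists v : 'rV[K]_n, (v <= Y i)%MS /\ ~~ (v <= Y i.+1)%MS.
Proof.
move=> lik; have [hi hp] := hc.
have [_ [a ha na]] := properP (hp i lik).
have cci : cc i = c i by rewrite /cc (minn_idPl (ltnW lik)).
have cci1 : cc i.+1 = c i.+1 by rewrite /cc (minn_idPl lik).
set i0 := ix (t0 R); set i1 := ix (line (rv2 1 a)).
pose ind : 'rV[K]_n := \row_j (trel (c i) i0 j)%:R.
have hI : is_ideal (c i) by apply: hi; apply: ltnW.
have hI1 : is_ideal (c i.+1) by apply: hi.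
have ind_V : (ind <= Vs K (c i))%MS.
  apply/memV => j j' hjj'; rewrite !mxE.
  case: (boolP (trel (c i) i0 j)) => h.
    by rewrite (rel_trans hI h hjj').
  case: (boolP (trel (c i) i0 j')) => // h'.
  by case/negP: h; apply: rel_trans hI h' (rel_sym hI hjj').
pose sm := \sum_j ind 0 j.
pose v := ind - (sm / n%:R) *: @ones R K.
exists v; split.
  rewrite sub_capmx; apply/andP; split.
    rewrite memS; apply/eqP; rewrite /v.
    under eq_bigr do rewrite !mxE mulr1.
    rewrite sumrB sum_const_row divfK ?nK // /sm; apply/eqP; rewrite subr_eq0; apply/eqP; apply: eq_bigr => j _; by rewrite mxE.
  rewrite cci addmx_sub // eqmx_opp scalemx_sub //; exact: ones_Vs.
apply/negP; rewrite sub_capmx cci1 => /andP[_ /memV h].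
have := h i0 i1; rewrite trel_e1 // ha => /(_ isT).
rewrite !mxE /i0 /i1 trel_e1 // (negbTE na) (rel_refl _ hI) /= => /addIr /eqP.
by rewrite oner_eq0.
Qed.

Definition Wsplit i : mxsplits rG (Y i) (Y i.+1) :=
  mx_reducibleS (Y_module i) (submx1 _) (redG HK) (Y_module i.+1) (Y_sub i).
Definition W i : 'M[K]_n := let: MxSplits Wi _ _ _ := Wsplit i in Wi.

Lemma W_spec i : [/\ mxmodule rG (W i), (Y i.+1 + W i :=: Y i)%MS &
  (Y i.+1 :&: W i = 0)%MS].
Proof. by rewrite /W; case: (Wsplit i) => Wi mW e d; split => //; apply/mxdirect_addsP. Qed.

Lemma W_sub i : (W i <= Y i)%MS.
Proof. by have [_ e _] := W_spec i; rewrite -e addsmxSr. Qed.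

Lemma W_nz i : (i < k)%N -> W i != 0.
Proof.
move=> lik; apply/eqP => W0; have [_ e _] := W_spec i.
have [v [h1 h2]] := Y_strict lik.
case/negP: h2; apply: submx_trans h1 _.
by rewrite -e addsmx_sub submx_refl W0 sub0mx.
Qed.

Lemma W_rank i : \rank (Y i) = (\rank (Y i.+1) + \rank (W i))%N.
Proof.
have [_ e d] := W_spec i.
by rewrite -mxrank_disjoint_sum // e.
Qed.

Lemma Ysum d : (d <= k)%N ->
  (Y (k - d)%N <= \sum_((k - d)%N <= i < k) W i)%MS /\
  \rank (Y (k - d)%N) = (\sum_((k - d)%N <= i < k) \rank (W i))%N.
Proof.
elim: d => [|d IH] ltd.
  by rewrite subn0 Yk sub0mx mxrank0 !big_geq.
have [IH1 IH2] := IH (ltnW ltd).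
have ej : (k - d.+1).+1 = (k - d)%N by lia.
have lj : (k - d.+1 < k)%N by lia.
rewrite !(big_ltn lj) ej; have [_ e _] := W_spec (k - d.+1).
split.
  rewrite -e addsmx_sub; apply/andP; split.
    by rewrite ej; apply: submx_trans IH1 _; exact: addsmxSr.
  exact: addsmxSl.
by rewrite W_rank ej IH2 addnC.
Qed.

Definition U (i : 'I_k) : 'M[K]_n := W i.

Lemma U_sum : (\sum_i U i :=: S)%MS /\ \rank S = (\sum_i \rank (U i))%N.
Proof.
have [h1 h2] := Ysum (leqnn k); rewrite subnn !big_mkord in h1 h2.
have eS : (S :=: Y 0)%MS.
  by apply/eqmxP; rewrite Y0 /Y capmxSl.
split.
  apply/eqmxP/andP; split.
    apply/sumsmx_subP => i _; apply: submx_trans (W_sub i) _.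
    by rewrite /Y capmxSl.
  exact: submx_trans Y0 h1.
by rewrite eS h2.
Qed.

End Chain.

Section Dim.
Variable R : finComUnitRingType.
Hypothesis uni : uniserial R.
Variable K : fieldType.
Variable k : nat.
Hypothesis hlen : ring_length R k.

Local Notation n := (nTits R).
Local Notation gT := {'GL_2[R]}.
Local Notation Lv i := (enum_val i : {set 'rV[R]_2}).
Local Notation rG := (rG R K).

Lemma dimC (J : finType) (Q : J -> 'M[K]_n) : (k.+1 < #|J|)%N ->
  (forall a, centgmx rG (Q a)) ->
  exists2 c : J -> K, (exists a, c a != 0) & \sum_a c a *: Q a = 0.
Proof.
move=> hJ hQ.
set Ids := [set I : {set R} | is_ideal I].
have hm := card_ideals uni hlen; rewrite -/Ids in hm.
pose i00 := ix (t0 R).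
pose rep (b : 'I_#|Ids|) : 'I_n * 'I_n :=
  odflt (i00, i00) [pick p : 'I_n * 'I_n | tinv p.1 p.2 == enum_val b].
pose E : 'M[K]_(#|J|, #|Ids|) := \matrix_(a, b) Q (enum_val a) (rep b).1 (rep b).2.
have rk : \rank (kermx E) != 0%N.
  rewrite mxrank_ker; have := rank_leq_col E; lia.
set z := nz_row (kermx E).
have nz : z != 0 by rewrite nz_row_eq0 -mxrank_eq0.
have zE : z *m E = 0 by apply/sub_kermxP; exact: nz_row_sub.
exists (fun a => z 0 (enum_rank a)).
  have [j hj] : exists j, z 0 j != 0.
    apply/existsP; apply: contraR nz => /existsPn h; apply/eqP/rowP => j.
    by rewrite mxE; apply/eqP; rewrite -[_ == _]negbK h.
  by exists (enum_val j); rewrite enum_valK.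
set A := \sum_a _.
have centA : centgmx rG A.
  apply/centgmxP => g Gg; rewrite mulmx_suml mulmx_sumr; apply: eq_bigr => a _.
  by rewrite -scalemxAl -scalemxAr (centgmxP (hQ a) g Gg).
have repA b : A (rep b).1 (rep b).2 = 0.
  move/matrixP/(_ 0 b): zE; rewrite !mxE => <-.
  rewrite /A summxE (reindex (@enum_val J predT)) /=; last first.
    by apply: onW_bij; apply: enum_val_bij.
  by apply: eq_bigr => j _; rewrite !mxE enum_valK.
apply/matrixP => i j; rewrite mxE.
have hmem : tinv i j \in Ids by rewrite inE pr_ideal.
pose b := enum_rank_in hmem (tinv i j).
have eb : enum_val b = tinv i j by rewrite enum_rankK_in.
have := repA b; rewrite /rep; case: pickP => [p /eqP ep|none]; last first.
  by have := none (i, j); rewrite /= eb eqxx.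
rewrite eb in ep => /= Ap.
have [g [g1 g2]] := orbit_idx uni ep.
by rewrite -Ap -(cent_inv g p.1 p.2 centA) g1 g2 !Lv_ix.
Qed.

End Dim.

Lemma full_cstS (R : finComUnitRingType) (K : fieldType) (HK : [pchar K] =i pred0) :
  (1%:M <= cst R K + Steinberg R K)%MS.
Proof.
apply/row_subP => r; set v := row r 1%:M.
pose a := (\sum_j v 0 j) / (nTits R)%:R.
have -> : v = a *: ones R K + (v - a *: ones R K) by rewrite addrC subrK.
apply: addmx_sub_adds.
  apply: scalemx_sub.
  have -> : ones R K = row (ix (t0 R)) (cst R K) by apply/rowP => j; rewrite !mxE.
  exact: row_sub.
rewrite memS; apply/eqP.
under eq_bigr do rewrite !mxE mulr1.
rewrite sumrB sum_const_row divfK ?nK //; apply/eqP; rewrite subr_eq0; apply/eqP.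
by apply: eq_bigr => j _; rewrite /v !mxE.
Qed.

Theorem mainTheorem6 (R : finComUnitRingType) (k : nat) (K : fieldType)
  (HR_local : local_ring R) (HR_uniserial : uniserial R)
  (HR_length : ring_length R k) (HK_char0 : [pchar K] =i pred0) :
  exists U : 'I_k -> 'M[K]_(nTits R),
    [/\ forall i, mxsimple (permRep R K) (U i),
        mxdirect (\sum_i U i),
        (\sum_i U i == Steinberg R K)%MS,
        forall i j, i != j -> ~ mx_iso (permRep R K) (U i) (U j) &
        forall i, ~ trivial_submod (permRep R K) (U i)].
Proof.
have [[c hc] _] := HR_length.
set Uf := U HK_char0 hc.
have [eS rS] := U_sum HR_uniserial HK_char0 HR_length hc.
pose Wf (i : 'I_k.+1) := if unlift 0 i is Some j then Uf j else cst R K.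
have WfS (j : 'I_k) : Wf (lift 0 j) = Uf j by rewrite /Wf liftK.
have Wf0 : Wf 0 = cst R K by rewrite /Wf unlift_none.
have sumWf : (\sum_i Wf i = cst R K + \sum_j Uf j)%MS.
  by rewrite big_ord_recl Wf0; congr (_ + _)%MS; apply: eq_bigr => j _; rewrite WfS.
have UfS j : (Uf j <= Steinberg R K)%MS by rewrite -eS (sumsmx_sup j).
have dx0 : (cst R K :&: \sum_j Uf j = 0)%MS.
  apply/eqP/rowV0P => v; rewrite sub_capmx => /andP[h1 h2].
  have : (v <= cst R K :&: Steinberg R K)%MS by rewrite sub_capmx h1 -eS h2.
  by rewrite (cst_S0 R HK_char0) submx0 => /eqP.
have modWf i : mxmodule (rG R K) (Wf i).
  rewrite /Wf; case: unliftP => [j _|_]; last exact: cst_module.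
  by have [] := W_spec HK_char0 hc j.
have nzWf i : Wf i != 0.
  rewrite /Wf; case: unliftP => [j _|_].
    exact: W_nz (ltn_ord j).
  apply/eqP => /matrixP/(_ (ix (t0 R)) (ix (t0 R))); rewrite !mxE => /eqP.
  by rewrite oner_eq0.
have dxWf : mxdirect (\sum_i Wf i).
  rewrite mxdirectE /= sumWf mxrank_disjoint_sum // eS rS big_ord_recl Wf0.
  by apply/eqP; congr (_ + _)%N; apply: eq_bigr => j _; rewrite WfS.
have dxW i : (Wf i :&: \sum_(j | j != i) Wf j = 0)%MS.
  by have := (mxdirect_sumsP dxWf) i isT.
have fullW : (1%:M <= \sum_i Wf i)%MS.
  rewrite sumWf; apply: submx_trans (full_cstS R HK_char0) _.
  by rewrite addsmxS // eS.
have dimW (J : finType) (Q : J -> 'M_(nTits R)) : (#|'I_k.+1| < #|J|)%N ->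
  (forall a, centgmx (rG R K) (Q a)) ->
  exists2 c : J -> K, (exists a, c a != 0) & \sum_a c a *: Q a = 0.
  by rewrite card_ord => hJ hQ; apply: (dimC HR_uniserial HR_length hJ hQ).
have simp := abstract_simple (redG HK_char0) modWf nzWf dxW fullW dimW.
have noni := abstract_noniso modWf nzWf dxW fullW dimW.
exists Uf; split.
- by move=> i; rewrite -WfS; apply: simp.
- by rewrite mxdirectE /= eS rS.
- by apply/eqmxP.
- move=> i j ij; rewrite -!WfS; apply: noni.
  by apply: contra ij => /eqP /lift_inj ->.
- move=> i [_ hfix].
  have [r hr] : exists r, row r (Uf i) != 0.
    apply/existsP; apply: contraR (nzWf (lift 0 i)) => /existsPn h.
    rewrite WfS; apply/eqP/row_matrixP => r; rewrite row0.
    by apply/eqP; rewrite -[_ == _]negbK h.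
  case/eqP: hr; apply: (fixed_S0 HR_uniserial HK_char0).
    by apply: submx_trans (row_sub r _) (UfS i).
  by move=> g; rewrite -row_mul hfix ?inE.
Qed.
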